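(* Let $h\in H$ and let $P^+_h(\mathbf t_{\mathcal N})=\sum_{\beta\in\mathcal B_h}p_\beta\mathbf t_{\mathcal N}^\beta$ be the quotient in the decomposition $f_h=P^+_h+f^{neg}_h$ (with $P^+_h$ a finite sum of monomials with exponents $\beta\not<0$ and $f^{neg}_h$ of negative degree in every $t_n$). Then the polynomial part satisfies $$P_h(\mathbf t_{\mathcal N})=\sum_{\beta\in\mathcal B_h}\mathfrak s(\beta)\,p_\beta\,\mathbf t_{\mathcal N}^{\beta}.$$
   Context: Let $\Gamma$ be a connected plumbing graph which is a tree, all of whose vertices have genus $0$ and an integer decoration $e_v$, such that the intersection matrix $I$ ($I_{vv}=e_v$, $I_{vw}=1$ if $v,w$ are adjacent, $0$ otherwise) is negative definite. Let $\mathcal V$ be its vertex set, $\delta_v$ the valency of $v$, and $\mathcal N=\{v:\delta_v\ge 3\}$ the set of nodes (assumed nonempty). Let $L=\bigoplus_v\mathbb Z E_v$ with the form given by $I$, $L'=\{l'\in L\otimes\mathbb Q:(l',E_v)\in\mathbb Z\ \forall v\}$ with basis $E_v^*$ defined by $(E_v^*,E_w)=-\delta_{vw}$, $H=L'/L$ and $[l']$ the class of $l'$. For $l'=\sum l_vE_v\in L\otimes\mathbb Q$ put $\mathbf t^{l'}=\prod_v t_v^{l_v}$. The zeta-function is $f(\mathbf t)=\prod_{v}(1-\mathbf t^{E_v^*})^{\delta_v-2}$; let $Z(\mathbf t)=\sum_{l'\in L'}p_{l'}\mathbf t^{l'}$ be its Taylor expansion at the origin, $Z_h=\sum_{[l']=h}p_{l'}\mathbf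 t^{l'}$, and $f_h(\mathbf t)$ the rational function whose expansion is $Z_h$. Let $\pi_{\mathcal N}$ be the projection of $L\otimes\mathbb Q$ onto $\bigoplus_{n\in\mathcal N}\mathbb QE_n$ forgetting non-node coordinates, and $\mathbf t_{\mathcal N}^x:=\prod_{n\in\mathcal N}t_n^{x_n}$ with $x_n$ the coordinates of $\pi_{\mathcal N}(x)$. The reduced zeta-function is $f_h(\mathbf t_{\mathcal N}):=f_h(\mathbf t)|_{t_v=1,\,v\notin\mathcal N}$; it can be written as $\mathbf t_{\mathcal N}^{r_h}\sum_\ell b_\ell\mathbf t_{\mathcal N}^{\ell}/A(\mathbf t_{\mathcal N})$, $A=\prod_{n\in\mathcal N}(1-\mathbf t_{\mathcal N}^{a_n})$, $a_n=\lambda_n\pi_{\mathcal N}(E_n^* )$, $\lambda_n>0$ (all coordinates of $a_n$ positive). A rational function $R/A$ ($R$ a finite sum of monomials with rational exponents) has negative degree in $t_n$ if every monomial of $R$ has $t_n$-exponent smaller than the $t_n$-exponent of $\mathbf t_{\mathcal N}^{\sum a_{n'}}$. For $\beta=\sum_{n\in\mathcal N}\beta_nE_n$, $\beta<0$ means all $\beta_n<0$. Orbifold graph $\Gamma^{orb}$: vertex set $\mathcal N$, with $n,n'$ joined by an edge iff the path in $\Gamma$ between them has all interior vertices of valency $2$; $\delta_{n,\mathcal N}$ denotes the valency of $n$ in $\Gamma^{orb}$ (a tree). For $n\in\mathcal N$, $P^n_h$ is the unique finite sum of monomials in $\mathbf t_{\mathcal N}$, each with $t_n$-exponent $\ge0$,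 such that $f_h-P^n_h$ (written over $A$) has negative degree in $t_n$ (one-variable polynomial part in $t_n$, other variables as coefficients). For an edge $nn'$ of $\Gamma^{orb}$, $P^{n,n'}_h$ is the unique finite sum of monomials each having $t_n$-exponent $\ge0$ or $t_{n'}$-exponent $\ge0$, such that $f_h-P^{n,n'}_h$ has negative degree in both $t_n$ and $t_{n'}$. The polynomial part is $P_h=\sum_{\text{edges } nn' \text{ of }\Gamma^{orb}}P^{n,n'}_h-\sum_{n\in\mathcal N}(\delta_{n,\mathcal N}-1)P^n_h$. Multiplicity: choose $n_0\in\mathcal N$, orient the edges of $\Gamma^{orb}$ towards $n_0$, and write $n>n'$ if there is an edge oriented from $n$ to $n'$. For $\beta$, let $\mathfrak s_n(\beta)=1$ if $\beta_n\ge0$ and $0$ otherwise; for $n>n'$ let $\mathfrak s_{n>n'}(\beta)=1$ if $\beta_n\ge0$ and $\beta_{n'}<0$, and $0$ otherwise. Set $\mathfrak s(\beta)=\mathfrak s_{n_0}(\beta)+\sum_{n>n'}\mathfrak s_{n>n'}(\beta)$ (this does not depend on $n_0$). *)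

(* Defs.v *)
From HB Require Import structures.
From mathcomp Require Import all_boot all_order all_algebra.
Set Implicit Arguments. Unset Strict Implicit. Unset Printing Implicit Defensive.
Import Order.TTheory GRing.Theory Num.Theory.
Local Open Scope ring_scope.

(* Exponents: vectors of rational coordinates l' = sum_v l_v E_v,      *)
(* indexed by the vertex set 'I_k.  Monomial t^l' = prod_v t_v^{l_v}.  *)
Definition expo (k : nat) := 'rV[rat]_k.

(* Finite sums of monomials with rational exponents and integer
   coefficients ("generalized polynomials"), as lists of terms. *)
Definition gpoly (k : nat) := seq (expo k * int).

Definition gcoef (k : nat) (P : gpoly k) (g : expo k) : int :=
  \sum_(m <- P | m.1 == g) m.2.

Definition gmul (k : nat) (P Q : gpoly k) : gpoly k :=
  [seq (m.1 + m'.1, m.2 * m'.2) | m <- P, m' <- Q].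
Definition gone (k : nat) : gpoly k := [:: (0, 1)].
Definition gsub (k : nat) (P Q : gpoly k) : gpoly k :=
  P ++ [seq (m.1, - m.2) | m <- Q].
Definition gbinom (k : nat) (c : expo k) : gpoly k := [:: (0, 1); (c, -1)].
Definition gprod (k : nat) (s : seq (gpoly k)) : gpoly k := foldr (@gmul k) (gone k) s.
Definition gpow (k : nat) (P : gpoly k) (n : nat) : gpoly k := iter n (gmul P) (gone k).
Definition gmap_exp (k : nat) (f : expo k -> expo k) (P : gpoly k) : gpoly k :=
  [seq (f m.1, m.2) | m <- P].
Definition gequiv (k : nat) (P Q : gpoly k) : Prop := forall g, gcoef P g = gcoef Q g.

(* formal series with rational exponents: coefficient functions *)
Definition series (k : nat) := expo k -> int.
Definition smul (k : nat) (P : gpoly k) (Z : series k) : series k :=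
  fun g => \sum_(m <- P) m.2 * Z (g - m.1).

(* Plumbing graph: vertices 'I_k, adjacency adj, decorations e.        *)
Definition valency (k : nat) (adj : rel 'I_k) (v : 'I_k) : nat := #|[set w | adj v w]|.

Definition is_tree (k : nat) (adj : rel 'I_k) : Prop :=
  [/\ symmetric adj, irreflexive adj,
      (forall u v, connect adj u v) &
      #|[set p : 'I_k * 'I_k | adj p.1 p.2 && (p.1 < p.2)%N]| = k.-1].

Definition intmat (k : nat) (adj : rel 'I_k) (e : 'I_k -> int) : 'M[rat]_k :=
  \matrix_(i, j) (if i == j then (e i)%:~R else if adj i j then 1 else 0).

Definition neg_def (k : nat) (M : 'M[rat]_k) : Prop :=
  forall x : 'rV[rat]_k, x != 0 -> (x *m M *m x^T) 0 0 < 0.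

(* E_v^* : (E_v^* , E_w) = - delta_vw, i.e. E_v^* *m I = - e_v *)
Definition Estar (k : nat) (M : 'M[rat]_k) (v : 'I_k) : expo k := - row v (invmx M).

Definition inL (k : nat) (x : expo k) : bool := [forall i, x 0 i \is a Num.int].
Definition inL' (k : nat) (M : 'M[rat]_k) (x : expo k) : bool := inL (x *m M).

Definition nodes (k : nat) (adj : rel 'I_k) : {set 'I_k} := [set v | (3 <= valency adj v)%N].

(* zeta function f = prod_v (1 - t^{E_v^*})^(delta_v - 2) = zNum / zDen *)
Definition zNum (k : nat) (adj : rel 'I_k) (M : 'M[rat]_k) : gpoly k :=
  gprod [seq gpow (gbinom (Estar M v)) (valency adj v - 2) | v <- enum 'I_k & (2 <= valency adj v)%N].
Definition zDen (k : nat) (adj : rel 'I_k) (M : 'M[rat]_k) : gpoly k :=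
  gprod [seq gpow (gbinom (Estar M v)) (2 - valency adj v) | v <- enum 'I_k & (valency adj v < 2)%N].

(* Z is the Taylor expansion at the origin of zNum / zDen:
   supported on nonnegative exponents and zDen * Z = zNum. *)
Definition is_taylor (k : nat) (Num Den : gpoly k) (Z : series k) : Prop :=
  (forall g, Z g != 0 -> forall i, 0 <= g 0 i) /\
  (forall g, smul Den Z g = gcoef Num g).

Definition Zpart (k : nat) (Z : series k) (h0 : expo k) : series k :=
  fun g => if inL (g - h0) then Z g else 0.

(* Q / prod_{c in cs} (1 - t^c) is a rational function (the c having
   positive coordinates) whose Taylor expansion is the series Zh. *)
Definition ratrep (k : nat) (Zh : series k) (Q : gpoly k) (cs : seq (expo k)) : Prop :=
  (forall c, c \in cs -> forall i, 0 < c 0 i) /\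
  (forall g, smul (gprod (map (@gbinom k) cs)) Zh g = gcoef Q g).

(* pi_N : forget non-node coordinates (i.e. put t_v = 1 for v not a node) *)
Definition projN (k : nat) (adj : rel 'I_k) (x : expo k) : expo k :=
  \row_i (if i \in nodes adj then x 0 i else 0).
Definition gred (k : nat) (adj : rel 'I_k) (P : gpoly k) : gpoly k := gmap_exp (projN adj) P.

Definition node_supp (k : nat) (adj : rel 'I_k) (P : gpoly k) : Prop :=
  forall g, gcoef P g != 0 -> forall v, v \notin nodes adj -> g 0 v = 0.

Definition avec (k : nat) (adj : rel 'I_k) (M : 'M[rat]_k) (lam : 'I_k -> rat) (n : 'I_k) : expo k :=
  lam n *: projN adj (Estar M n).
Definition Aden (k : nat) (adj : rel 'I_k) (M : 'M[rat]_k) (lam : 'I_k -> rat) : gpoly k :=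
  gprod [seq gbinom (avec adj M lam n) | n <- enum (nodes adj)].
Definition sumA (k : nat) (adj : rel 'I_k) (M : 'M[rat]_k) (lam : 'I_k -> rat) : expo k :=
  \sum_(n in nodes adj) avec adj M lam n.

(* The rational function Rn / A has negative degree in t_n *)
Definition neg_deg (k : nat) (adj : rel 'I_k) (M : 'M[rat]_k) (lam : 'I_k -> rat)
    (Rn : gpoly k) (n : 'I_k) : Prop :=
  forall g, gcoef Rn g != 0 -> g 0 n < sumA adj M lam 0 n.

(* numerator of (R / A) - P over A *)
Definition minus_over (k : nat) (adj : rel 'I_k) (M : 'M[rat]_k) (lam : 'I_k -> rat)
    (R P : gpoly k) : gpoly k := gsub R (gmul P (Aden adj M lam)).

Definition is_Pn (k : nat) (adj : rel 'I_k) (M : 'M[rat]_k) (lam : 'I_k -> rat)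
    (R : gpoly k) (n : 'I_k) (P : gpoly k) : Prop :=
  [/\ node_supp adj P,
      (forall g, gcoef P g != 0 -> 0 <= g 0 n) &
      neg_deg adj M lam (minus_over adj M lam R P) n].

Definition is_Pnn (k : nat) (adj : rel 'I_k) (M : 'M[rat]_k) (lam : 'I_k -> rat)
    (R : gpoly k) (n n' : 'I_k) (P : gpoly k) : Prop :=
  [/\ node_supp adj P,
      (forall g, gcoef P g != 0 -> (0 <= g 0 n) || (0 <= g 0 n')),
      neg_deg adj M lam (minus_over adj M lam R P) n &
      neg_deg adj M lam (minus_over adj M lam R P) n'].

Definition is_Pplus (k : nat) (adj : rel 'I_k) (M : 'M[rat]_k) (lam : 'I_k -> rat)
    (R : gpoly k) (P : gpoly k) : Prop :=
  [/\ node_supp adj P,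
      (forall g, gcoef P g != 0 -> exists2 n, n \in nodes adj & 0 <= g 0 n) &
      (forall n, n \in nodes adj -> neg_deg adj M lam (minus_over adj M lam R P) n)].

(* Orbifold graph: n, n' nodes joined iff the path in Gamma between them
   has all interior vertices of valency 2.  A simple path has at most k-2
   interior vertices, so we enumerate candidate interior sequences as
   m.-tuples with m < k. *)
Definition orb_adj (k : nat) (adj : rel 'I_k) (n n' : 'I_k) : bool :=
  [&& n \in nodes adj, n' \in nodes adj &
   [exists m : 'I_k, exists t : m.-tuple 'I_k,
      [&& path adj n (rcons (val t) n'), uniq (n :: rcons (val t) n') &
          all (fun w => valency adj w == 2) (val t)]]].

Definition orb_valency (k : nat) (adj : rel 'I_k) (n : 'I_k) : nat :=
  #|[set n' | orb_adj adj n n']|.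

(* polynomial part P_h (coefficientwise); each edge nn' counted once (n < n') *)
Definition Ph_coef (k : nat) (adj : rel 'I_k) (Pv : 'I_k -> gpoly k)
    (Pe : 'I_k -> 'I_k -> gpoly k) (g : expo k) : int :=
  \sum_(n : 'I_k) \sum_(n' : 'I_k | orb_adj adj n n' && (n < n')%N) gcoef (Pe n n') g
  - \sum_(n in nodes adj) ((orb_valency adj n)%:Z - 1) * gcoef (Pv n) g.

(* orientation towards n0:  n > n'  iff  nn' is an edge of Gamma^orb and
   n' lies on the path from n to n0 (n' = n0, or n' separates n from n0). *)
Definition oriented (k : nat) (adj : rel 'I_k) (n0 n n' : 'I_k) : bool :=
  orb_adj adj n n' &&
  ((n' == n0) || ~~ connect [rel x y | [&& adj x y, x != n' & y != n']] n n0).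

Definition sgn_nonneg (x : rat) : int := if 0 <= x then 1 else 0.
Definition mult_s (k : nat) (adj : rel 'I_k) (n0 : 'I_k) (b : expo k) : int :=
  sgn_nonneg (b 0 n0) +
  \sum_(n : 'I_k) \sum_(n' : 'I_k | oriented adj n0 n n')
     (if (0 <= b 0 n) && (b 0 n' < 0) then 1 else 0).

(* Main.v *)
Require Import Defs.
From HB Require Import structures.
From mathcomp Require Import all_boot all_order all_algebra.
From mathcomp Require Import ring.
Set Implicit Arguments. Unset Strict Implicit. Unset Printing Implicit Defensive.
Import Order.TTheory GRing.Theory Num.Theory.
Local Open Scope ring_scope.
Section Lex.
Variable k : nat.
Implicit Types (x y u v : expo k) (s : seq 'I_k).

Fixpoint ltI s x y : bool :=
  if s is i :: s' then (x 0 i < y 0 i) || ((x 0 i == y 0 i) && ltI s' x y) else false.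

Lemma ltI_irr s x : ltI s x x = false.
Proof. by elim: s => //= i s ->; rewrite ltxx eqxx. Qed.

Lemma ltI_trans s x y z : ltI s x y -> ltI s y z -> ltI s x z.
Proof.
elim: s => //= i s IH.
case/orP=> [lxy|/andP[/eqP exy hxy]]; case/orP=> [lyz|/andP[/eqP eyz hyz]].
- by rewrite (lt_trans lxy lyz).
- by rewrite -eyz lxy.
- by rewrite exy lyz.
- by rewrite exy eyz eqxx (IH hxy hyz) orbT.
Qed.

Lemma ltI_addr s x y u : ltI s (x + u) (y + u) = ltI s x y.
Proof.
elim: s => //= i s ->; rewrite !mxE ltrD2r; congr (_ || (_ && _)).
by apply/eqP/eqP => [/addIr|->].
Qed.

Lemma ltI_add s x y u v : ltI s x y -> ltI s u v -> ltI s (x + u) (y + v).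
Proof.
move=> h1 h2; apply: (@ltI_trans _ _ (y + u)); first by rewrite ltI_addr.
by rewrite (addrC y) (addrC y) ltI_addr.
Qed.

Lemma ltI_total s x y : ltI s x y || ltI s y x || all (fun i => x 0 i == y 0 i) s.
Proof.
elim: s => //= i s IH.
case: (ltgtP (x 0 i) (y 0 i)) => //=.
Qed.

Lemma ltI_head i s x y : ltI (i :: s) x y -> x 0 i <= y 0 i.
Proof. by case/orP=> [/ltW|/andP[/eqP -> _]]. Qed.

Definition ordn (n : 'I_k) := n :: enum 'I_k.
Definition ltn_ (n : 'I_k) x y := ltI (ordn n) x y.

Lemma ltn_total n x y : x != y -> ltn_ n x y || ltn_ n y x.
Proof.
move=> nxy; apply/negPn/negP => H.
have: all (fun i => x 0 i == y 0 i) (ordn n).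
  have := ltI_total (ordn n) x y; rewrite /ltn_ in H.
  by case: (ltI _ x y) H => //; case: (ltI _ y x).
move/allP => A; case/eqP: nxy; apply/rowP => i.
apply/eqP; apply: A; by rewrite inE mem_enum orbT.
Qed.

Lemma ltn_head n x y : ltn_ n x y -> x 0 n <= y 0 n.
Proof. exact: ltI_head. Qed.

Definition len_ n x y := (x == y) || ltn_ n x y.

Lemma len_head n x y : len_ n x y -> x 0 n <= y 0 n.
Proof. by case/orP=> [/eqP->//|/ltn_head]. Qed.

Lemma len_add_eq n x y u v : len_ n x y -> len_ n u v -> x + u = y + v -> x = y /\ u = v.
Proof.
case/orP=> [/eqP->|h1]; case/orP=> [/eqP->|h2] //.
- by move/(addrI _).
- by move/(addIr _) => e; rewrite /ltn_ e ltI_irr in h1.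
- move=> e; have := ltI_add h1 h2; by rewrite /ltn_ e ltI_irr.
Qed.

Lemma len_add n x y u v : len_ n x y -> len_ n u v -> len_ n (x + u) (y + v).
Proof.
rewrite /len_; case/orP=> [/eqP->|h1]; case/orP=> [/eqP->|h2].
- by rewrite eqxx.
- by rewrite !(addrC y) /ltn_ ltI_addr; rewrite /ltn_ in h2; rewrite h2 orbT.
- by rewrite /ltn_ ltI_addr; rewrite /ltn_ in h1; rewrite h1 orbT.
- by rewrite /ltn_ (ltI_add h1 h2) orbT.
Qed.

Lemma seq_max n (l : seq (expo k)) : l != [::] ->
  exists2 m, m \in l & forall x, x \in l -> len_ n x m.
Proof.
elim: l => // a l IH _; case: (eqVneq l [::]) => [->|lnz].
  by exists a; rewrite ?mem_head // => x; rewrite inE => /eqP->; rewrite /len_ eqxx.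
have [m ml Hm] := IH lnz.
have [am|ma] := boolP (len_ n a m).
  exists m; first by rewrite inE ml orbT.
  by move=> x; rewrite inE => /orP[/eqP->//|/Hm].
exists a; first exact: mem_head.
have lma : ltn_ n m a.
  have nam : a != m by apply: contra ma => /eqP->; rewrite /len_ eqxx.
  by move: (ltn_total n nam) ma; rewrite /len_ (negbTE nam) /=; case: (ltn_ n a m).
move=> x; rewrite inE => /orP[/eqP->|/Hm]; first by rewrite /len_ eqxx.
case/orP=> [/eqP->|h]; first by rewrite /len_ lma orbT.
by rewrite /len_ /ltn_ (ltI_trans h lma) orbT.
Qed.

End Lex.

Section GPoly.
Variable k : nat.
Implicit Types (P Q D : gpoly k) (g x y p q : expo k).

Lemma gcoef_nz P g : gcoef P g != 0 -> g \in map fst P.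
Proof.
apply: contraR => ng; rewrite /gcoef big_seq_cond big1 // => m /andP[mP /eqP e].
by case/negP: ng; rewrite -e map_f.
Qed.

Lemma gcoef_gsub P Q g : gcoef (gsub P Q) g = gcoef P g - gcoef Q g.
Proof. by rewrite /gcoef /gsub big_cat big_map /= sumrN. Qed.

Lemma gcoef_gmulE P Q g : gcoef (gmul P Q) g =
  \sum_(m <- P) \sum_(m' <- Q) (if m.1 + m'.1 == g then m.2 * m'.2 else 0).
Proof.
rewrite /gcoef /gmul big_mkcond.
by rewrite big_allpairs_dep.
Qed.

Lemma regroup P (F : expo k -> int) :
  \sum_(m <- P) F m.1 * m.2 = \sum_(x <- undup (map fst P)) F x * gcoef P x.
Proof.
rewrite /gcoef; symmetry.
rewrite (eq_bigr (fun x => \sum_(m <- P | m.1 == x) F m.1 * m.2)); last first.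
  by move=> x _; rewrite mulr_sumr; apply: eq_bigr => m /eqP ->.
rewrite (exchange_big_dep predT) //=.
apply: eq_big_seq => m mP.
rewrite -big_filter.
have -> : [seq i <- undup [seq i.1 | i <- P] | m.1 == i] = [:: m.1].
  rewrite (eq_filter (a2 := pred1 m.1)); last by move=> z; rewrite /= eq_sym.
  apply: filter_pred1_uniq; first exact: undup_uniq.
  by rewrite mem_undup; apply: map_f.
by rewrite big_seq1.
Qed.


Lemma gcoef_gmul P Q g : gcoef (gmul P Q) g =
  \sum_(x <- undup (map fst P)) \sum_(y <- undup (map fst Q))
     (if x + y == g then gcoef P x * gcoef Q y else 0).
Proof.
rewrite gcoef_gmulE.
pose F2 x y : int := if x + y == g then 1 else 0.
transitivity (\sum_(m <- P) (\sum_(y <- undup (map fst Q)) F2 m.1 y * gcoef Q y) * m.2).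
  apply: eq_bigr => m _; rewrite -(regroup Q (F2 m.1)) mulr_suml.
  apply: eq_bigr => m' _; rewrite /F2; case: eqP => _; last by rewrite !mul0r.
  by rewrite mul1r mulrC.
rewrite (regroup P (fun x => \sum_(y <- undup (map fst Q)) F2 x y * gcoef Q y)).
apply: eq_bigr => x _; rewrite mulr_suml; apply: eq_bigr => y _.
rewrite /F2; case: eqP => _; last by rewrite !mul0r.
by rewrite mul1r mulrC.
Qed.

Lemma gmul_supp P Q g : gcoef (gmul P Q) g != 0 ->
  exists x, exists y, [/\ gcoef P x != 0, gcoef Q y != 0 & g = x + y].
Proof.
rewrite gcoef_gmul => nz.
have : has (fun x => has (fun y => [&& x + y == g, gcoef P x != 0 & gcoef Q y != 0])
          (undup (map fst Q))) (undup (map fst P)).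
  apply/negPn/negP => /hasPn H; case/eqP: nz.
  apply: big1_seq => x /andP[_ xP]; apply: big1_seq => y /andP[_ yQ].
  have := H x xP; move/hasPn/(_ y yQ).
  case: eqP => // _ /=; case: (eqVneq (gcoef P x) 0) => [->|]; first by rewrite mul0r.
  by case: (eqVneq (gcoef Q y) 0) => [->|]; first by rewrite mulr0.
case/hasP => x _ /hasP[y _ /and3P[/eqP e a b]].
by exists x, y.
Qed.

Definition islead n P p := gcoef P p != 0 /\ forall g, gcoef P g != 0 -> len_ n g p.

Lemma lead_exists n P g : gcoef P g != 0 -> exists p, islead n P p.
Proof.
move=> nz; set l := [seq x <- map fst P | gcoef P x != 0].
have gl : g \in l by rewrite mem_filter nz gcoef_nz.
have [|m ml Hm] := seq_max n (l := l); first by case: l gl.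
exists m; split; first by move: ml; rewrite mem_filter => /andP[].
by move=> x nx; apply: Hm; rewrite mem_filter nx gcoef_nz.
Qed.

Lemma lead_mul n P Q p q : islead n P p -> islead n Q q ->
  gcoef (gmul P Q) (p + q) = gcoef P p * gcoef Q q /\ islead n (gmul P Q) (p + q).
Proof.
move=> [pnz lp] [qnz lq].
have E : gcoef (gmul P Q) (p + q) = gcoef P p * gcoef Q q.
  rewrite gcoef_gmul (bigD1_seq p) ?undup_uniq ?mem_undup ?gcoef_nz //=.
  rewrite (bigD1_seq q) ?undup_uniq ?mem_undup ?gcoef_nz //= eqxx.
  rewrite big1 ?addr0; last first.
    move=> y nyq; case: eqP => [/(addrI p) e|//]; by rewrite e eqxx in nyq.
  rewrite big1 ?addr0 // => x nxp; apply: big1 => y _.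
  case: eqP => // e.
  case: (eqVneq (gcoef P x) 0) => [->|xnz]; first by rewrite mul0r.
  case: (eqVneq (gcoef Q y) 0) => [->|ynz]; first by rewrite mulr0.
  by have [ex _] := len_add_eq (lp x xnz) (lq y ynz) e; rewrite ex eqxx in nxp.
split=> //; split; first by rewrite E mulf_neq0.
move=> g /gmul_supp [x [y [xnz ynz ->]]]; exact: len_add (lp x xnz) (lq y ynz).
Qed.

Lemma gcoef_gone g : gcoef (gone k) g = if g == 0 then 1 else 0.
Proof. by rewrite /gcoef /gone big_cons big_nil /= eq_sym; case: eqP; rewrite ?addr0. Qed.

Lemma gcoef_gbinom (c : expo k) g : gcoef (gbinom c) g =
  (if g == 0 then 1 else 0) + (if g == c then -1 else 0).
Proof.
rewrite /gcoef /gbinom !big_cons big_nil /= addr0 (eq_sym 0) (eq_sym c).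
by case: eqP; case: eqP.
Qed.

Lemma lead_gone n : islead n (gone k) 0.
Proof.
split; first by rewrite gcoef_gone eqxx.
by move=> g; rewrite gcoef_gone; case: (eqVneq g 0) => [-> _|]; rewrite ?eqxx // /len_ eqxx.
Qed.

Lemma lead_binom n (c : expo k) : c != 0 -> 0 <= c 0 n ->
  exists2 p, islead n (gbinom c) p & p 0 n = c 0 n.
Proof.
move=> cnz cn.
have sup g : gcoef (gbinom c) g != 0 -> (g == 0) || (g == c).
  by rewrite gcoef_gbinom; case: (g == 0); case: (g == c); rewrite //= ?addr0 ?eqxx.
case: (boolP (ltn_ n 0 c)) => [l0c|nl].
  exists c => //; split; first by rewrite gcoef_gbinom eqxx eq_sym (negbTE cnz) add0r.
  move=> g /sup /orP[/eqP->|/eqP->]; by rewrite /len_ ?l0c ?orbT ?eqxx.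
have lc0 : ltn_ n c 0 by have := ltn_total n cnz; rewrite (negbTE nl) orbF.
exists 0.
  split; first by rewrite gcoef_gbinom eqxx (eq_sym 0 c) (negbTE cnz) addr0.
  move=> g /sup /orP[/eqP->|/eqP->]; by rewrite /len_ ?lc0 ?orbT ?eqxx.
by apply/eqP; rewrite mxE eq_le cn /=; have := ltn_head lc0; rewrite mxE.
Qed.

Lemma lead_gprod n (cs : seq (expo k)) : (forall c, c \in cs -> c != 0 /\ 0 <= c 0 n) ->
  exists2 p, islead n (gprod (map (@gbinom k) cs)) p & p 0 n = \sum_(c <- cs) c 0 n.
Proof.
elim: cs => [_|c cs IH H].
  by exists 0; [exact: lead_gone | rewrite big_nil mxE].
have [|p lp pn] := IH; first by move=> c' c'cs; apply: H; rewrite inE c'cs orbT.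
have [cnz cn] := H c (mem_head _ _).
have [q lq qn] := lead_binom cnz cn.
exists (q + p); first exact: (lead_mul lq lp).2.
by rewrite big_cons mxE qn pn.
Qed.

Lemma core n D A a : islead n A a ->
  (forall g, gcoef (gmul D A) g != 0 -> g 0 n < a 0 n) ->
  forall g, gcoef D g != 0 -> g 0 n < 0.
Proof.
move=> lA H g nz; rewrite ltNge; apply/negP => g0.
have [p lp] := lead_exists n nz.
have [E [nzp _]] := lead_mul lp lA.
have := H _ nzp; rewrite mxE -ltrBrDr subrr => pn.
have := len_head (lp.2 g nz); move=> gp.
by have := le_lt_trans (le_trans g0 gp) pn; rewrite ltxx.
Qed.

Lemma bound_mul n X A a : islead n A a ->
  (forall x, gcoef X x != 0 -> x 0 n < 0) ->
  forall g, gcoef (gmul X A) g != 0 -> g 0 n < a 0 n.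
Proof.
move=> lA H g /gmul_supp [x [y [xnz ynz ->]]].
rewrite mxE; have := H x xnz; have := len_head (lA.2 y ynz) => ya xn.
by rewrite -(add0r (a 0 n)) ltr_leD.
Qed.

Lemma gcoef_gmul_sub P1 P2 Q g :
  gcoef (gmul (gsub P1 P2) Q) g = gcoef (gmul P1 Q) g - gcoef (gmul P2 Q) g.
Proof.
rewrite !gcoef_gmulE /gsub big_cat big_map /= -sumrN; congr (_ + _).
apply: eq_bigr => m _; rewrite -sumrN; apply: eq_bigr => m' _.
by case: eqP; rewrite ?oppr0 // mulNr.
Qed.

Lemma gcoef_gmul_split P Q (pr : pred (expo k)) g :
  gcoef (gmul P Q) g = gcoef (gmul (filter (fun m => pr m.1) P) Q) g
                     + gcoef (gmul (filter (fun m => ~~ pr m.1) P) Q) g.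
Proof. by rewrite !gcoef_gmulE !big_filter (bigID (fun m => pr m.1)). Qed.

Lemma gcoef_filter P (pr : pred (expo k)) g :
  gcoef (filter (fun m => pr m.1) P) g = if pr g then gcoef P g else 0.
Proof.
rewrite /gcoef big_filter_cond; case: ifP => pg.
  by apply: eq_bigl => m; case: eqP => [->|]; rewrite ?pg ?andbF.
by apply: big1 => m /andP[pm /eqP e]; rewrite e pg in pm.
Qed.

End GPoly.
Section MMat.
Variable k : nat.
Variable M : 'M[rat]_k.
Hypothesis offd : forall i j, i != j -> 0 <= M i j.
Hypothesis nd : neg_def M.

Lemma qfE (a b : 'rV[rat]_k) :
  (a *m M *m b^T) 0 0 = \sum_j (\sum_i a 0 i * M i j) * b 0 j.
Proof. rewrite !mxE; apply: eq_bigr => j _; by rewrite !mxE. Qed.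

Lemma M_unit : M \in unitmx.
Proof.
rewrite unitmxE unitfE; apply/negP => /det0P [v vnz vM].
by have := nd vnz; rewrite vM mul0mx mxE ltxx.
Qed.

Lemma sol_sign v (x : 'rV[rat]_k) : x *m M = delta_mx 0 v ->
  (forall w, x 0 w <= 0) /\ x 0 v < 0.
Proof.
move=> xM.
have dE (b : 'rV[rat]_k) : (x *m M *m b^T) 0 0 = b 0 v.
  rewrite xM mxE (bigD1 v) //= !mxE !eqxx mul1r big1 ?addr0 // => j nj.
  by rewrite !mxE (negbTE nj) andbF mul0r.
have xnz : x != 0.
  apply/eqP => x0; have := congr1 (fun A : 'rV[rat]_k => A 0 v) xM.
  by rewrite x0 mul0mx !mxE !eqxx.
split; last by rewrite -dE; exact: nd.
pose p := \row_i Num.max (x 0 i) 0.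
pose q := \row_i Num.max (- x 0 i) 0.
have xpq : x = p - q.
  apply/rowP => i; rewrite !mxE.
  case: (lerP 0 (x 0 i)) => h.
    by rewrite (max_idPr _) ?subr0 // oppr_le0.
  by rewrite (max_idPl _) ?opprK ?add0r // oppr_ge0 ltW.
have qMp : 0 <= (q *m M *m p^T) 0 0.
  rewrite qfE; apply: sumr_ge0 => j _; rewrite mulr_suml; apply: sumr_ge0 => i _.
  case: (eqVneq i j) => [->|nij].
    rewrite !mxE; case: (lerP 0 (x 0 j)) => h.
      by rewrite (max_idPr (_ : - x 0 j <= 0)) ?mul0r // oppr_le0.
    by rewrite mulr0.
  by rewrite !mxE !mulr_ge0 ?offd // le_max lexx orbT.
have p0 : 0 <= p 0 v by rewrite mxE le_max lexx orbT.
have pp : 0 <= (p *m M *m p^T) 0 0.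
  have := dE p; rewrite xpq !mulmxBl.
  move: qMp; set a := p *m M *m p^T; set b := q *m M *m p^T => qMp.
  rewrite [(a - b) 0 0]mxE [(- b) 0 0]mxE => /eqP; rewrite subr_eq => /eqP ->.
  exact: addr_ge0.
case: (eqVneq p 0) => [pz|pnz]; last by have := nd pnz; rewrite ltNge pp.
move=> w; have := congr1 (fun A : 'rV[rat]_k => A 0 w) pz; rewrite !mxE => /eqP.
by case: (lerP 0 (x 0 w)) => h; [move/eqP->|move=> _; exact: ltW].
Qed.

Lemma Estar_sign v : (forall w, 0 <= Estar M v 0 w) /\ 0 < Estar M v 0 v.
Proof.
have xM : row v (invmx M) *m M = delta_mx 0 v by rewrite -row_mul mulVmx ?M_unit // row1.
have [H1 H2] := sol_sign xM.
split; [move=> w; have := H1 w | have := H2]; rewrite /Estar !mxE; 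
  by rewrite ?oppr_ge0 ?oppr_gt0.
Qed.

End MMat.
Local Open Scope ring_scope.
Definition ind (b : bool) : int := if b then 1 else 0.

Section Comb.
Variable k : nat.
Variables (oa or : rel 'I_k) (N : {set 'I_k}) (n0 : 'I_k) (X : 'I_k -> bool).
Hypothesis Hn0 : n0 \in N.
Hypothesis H1 : forall n n', oa n n' -> n \in N.
Hypothesis H2 : forall n n', oa n n' = oa n' n.
Hypothesis H3o : forall n n', or n n' -> oa n n'.
Hypothesis H3 : forall n n', oa n n' -> or n n' = ~~ or n' n.
Hypothesis H4 : forall n, n \in N -> #|[set n' | or n n']| = (n != n0).

Let Sor (F : 'I_k -> 'I_k -> int) := \sum_n \sum_(n' | or n n') F n n'.

Lemma oa_irr n : oa n n = false.
Proof. by apply/negP => h; have := H3 h; case: (or n n). Qed.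

Lemma oa_split n n' : ind (oa n n') = ind (or n n') + ind (or n' n).
Proof.
case: (boolP (oa n n')) => h.
  by rewrite (H3 h); case: (or n' n).
have a : or n n' = false by apply/negP => /H3o; rewrite (negbTE h).
have b : or n' n = false by apply/negP => /H3o; rewrite H2 (negbTE h).
by rewrite a b.
Qed.

Lemma sum_ind (P : pred 'I_k) (F : 'I_k -> int) :
  \sum_(i | P i) F i = \sum_i ind (P i) * F i.
Proof. by rewrite big_mkcond; apply: eq_bigr => i _; case: (P i); rewrite ?mul1r ?mul0r. Qed.

Lemma half_sum (F : 'I_k -> 'I_k -> int) : (forall n n', F n n' = F n' n) ->
  \sum_n \sum_(n' | oa n n' && (n < n')%N) F n n' = Sor F.
Proof.
move=> Fs; rewrite /Sor.
transitivity (\sum_n \sum_n' (ind (or n n') * ind (n < n')%N * F n n'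
                            + ind (or n' n) * ind (n < n')%N * F n n')).
  apply: eq_bigr => n _; rewrite sum_ind; apply: eq_bigr => n' _.
  rewrite -mulrDl -mulrDl -oa_split; by case: (oa n n'); case: (n < n')%N; rewrite ?mulr0 ?mul0r ?mulr1.
under eq_bigr => n _ do rewrite big_split /=.
rewrite big_split /= [X in _ + X]exchange_big /=.
rewrite -big_split /=; apply: eq_bigr => n _; rewrite [RHS]sum_ind -big_split /=.
apply: eq_bigr => n' _; rewrite (Fs n' n).
case: (boolP (or n n')) => h; last by rewrite /= !mul0r addr0.
have nn : n != n' by apply: contraTneq (H3o h) => ->; rewrite oa_irr.
rewrite /= !mul1r; case: (ltngtP n n') => e /=; rewrite ?mul1r ?mul0r ?addr0 ?add0r //.
by move: nn; rewrite (_ : n = n') ?eqxx //; apply: val_inj.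
Qed.

Lemma sum_out (G : 'I_k -> int) :
  Sor (fun n _ => G n) = \sum_(n in N) G n - G n0.
Proof.
rewrite /Sor (bigID (fun n => n \in N)) /= [X in _ + X]big1; last first.
  move=> n nN; apply: big1 => n' /H3o /H1; by rewrite (negbTE nN).
rewrite addr0 (bigD1 n0) //= [in RHS](bigD1 n0) //= addrAC subrr add0r.
have E n : n \in N -> \sum_(n' | or n n') G n = (n != n0)%:R * G n.
  by move=> nN; rewrite sumr_const -H4 // mulr_natl cardsE.
rewrite E // eqxx mul0r add0r; apply: eq_bigr => n /andP[nN nn].
by rewrite E // nn mul1r.
Qed.

Definition delta n := #|[set n' | oa n n']|.

Lemma delta_sum n : (delta n)%:Z = \sum_n' ind (oa n n').
Proof.
transitivity (\sum_(n' | oa n n') (1:int)).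
  by rewrite sumr_const /delta cardsE natz.
by rewrite sum_ind; apply: eq_bigr => n' _; rewrite mulr1.
Qed.

Lemma sum_delta (G : 'I_k -> int) :
  \sum_(n in N) (delta n)%:Z * G n = Sor (fun n _ => G n) + Sor (fun _ n' => G n').
Proof.
have SI F : Sor F = \sum_n \sum_n' ind (or n n') * F n n'.
  by apply: eq_bigr => n _; rewrite sum_ind.
rewrite !SI.
rewrite [X in _ + X]exchange_big /= -big_split /=.
rewrite [RHS](bigID (fun n => n \in N)) /= [X in _ + X]big1; last first.
  move=> n nN; rewrite -big_split big1 // => n' _ /=.
  case: (boolP (or n n')) => [/H3o/H1|_]; first by rewrite (negbTE nN).
  case: (boolP (or n' n)) => [/H3o|_]; last by rewrite !mul0r addr0.
  by rewrite H2 => /H1; rewrite (negbTE nN).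
rewrite addr0; apply: eq_bigr => n _.
rewrite delta_sum mulr_suml -big_split; apply: eq_bigr => n' _ /=.
by rewrite -mulrDl -oa_split.
Qed.

Lemma ind_or a b : ind (a || b) = ind a + ind b - ind (a && b).
Proof. by case: a; case: b; rewrite /= ?addr0 ?subr0 ?addrK. Qed.

Lemma ind_andN a b : ind (a && ~~ b) = ind a - ind (a && b).
Proof. by case: a; case: b; rewrite /= ?subr0 ?subrr. Qed.

Lemma comb_identity :
  \sum_n \sum_(n' | oa n n' && (n < n')%N) ind (X n || X n')
  - \sum_(n in N) ((delta n)%:Z - 1) * ind (X n)
  = ind (X n0) + \sum_n \sum_(n' | or n n') ind (X n && ~~ X n').
Proof.
rewrite half_sum; last by move=> n n'; rewrite orbC.
have E1 : Sor (fun n n' => ind (X n || X n')) =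
   Sor (fun n _ => ind (X n)) + Sor (fun _ n' => ind (X n')) - Sor (fun n n' => ind (X n && X n')).
  rewrite /Sor -big_split -sumrB /=; apply: eq_bigr => n _.
  by rewrite -big_split -sumrB; apply: eq_bigr => n' _; rewrite ind_or.
have E2 : \sum_n \sum_(n' | or n n') ind (X n && ~~ X n') =
   Sor (fun n _ => ind (X n)) - Sor (fun n n' => ind (X n && X n')).
  rewrite /Sor -sumrB; apply: eq_bigr => n _.
  by rewrite -sumrB; apply: eq_bigr => n' _; rewrite ind_andN.
rewrite E1 E2.
under eq_bigr => n _ do rewrite mulrBl mul1r.
rewrite sumrB sum_delta sum_out.
set A := \sum_(n in N) ind (X n).
set B := Sor (fun _ n' => ind (X n')).
set C := Sor (fun n n' => ind (X n && X n')).
rewrite -/A; ring.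
Qed.

End Comb.
Definition edgs (k : nat) (r : rel 'I_k) : {set 'I_k * 'I_k} :=
  [set p : 'I_k * 'I_k | r p.1 p.2 && (p.1 < p.2)%N].

Lemma EC (k : nat) (r : rel 'I_k) : symmetric r -> (forall u v, connect r u v) ->
  (k.-1 <= #|edgs r|)%N.
Proof.
move=> rs rc.
case: (ltnP 0 k) => [kpos|k0]; last first.
  suff -> : k.-1 = 0%N by []. by move: k0; rewrite leqn0 => /eqP ->.
pose z := Ordinal kpos.
pose Pd x j := [exists t : j.-tuple 'I_k, path r x t && (last x t == z)].
have exP x : exists j, Pd x j.
  have /connectP [p pp lp] := rc x z.
  by exists (size p); apply/existsP; exists (in_tuple p); rewrite /= pp -lp eqxx.
pose d x := ex_minn (exP x).
have dmin x j : Pd x j -> (d x <= j)%N.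
  by rewrite /d; case: (ex_minnP (exP x)) => m _ H /H.
have dP x : Pd x (d x) by rewrite /d; case: (ex_minnP (exP x)).
have step x : x != z -> exists2 y, r x y & (d y < d x)%N.
  move=> xz; have/existsP [t /andP[pt /eqP lt]] := dP x.
  have st := size_tuple t; move: (tval t) st pt lt => [|y s] /= st.
    by move=> _ e; rewrite e eqxx in xz.
  case/andP=> rxy ps ls; exists y => //.
  have : Pd y (size s) by apply/existsP; exists (in_tuple s); rewrite /= ps ls eqxx.
  by move/dmin; rewrite -st.
pose par x := odflt z [pick y | r x y & (d y < d x)%N].
have parP x : x != z -> r x (par x) && (d (par x) < d x)%N.
  move=> xz; rewrite /par; case: pickP => [y //|H] /=.
  by have [y r1 r2] := step x xz; have := H y; rewrite r1 r2.
pose f (x : 'I_k) := if (x < par x)%N then (x, par x) else (par x, x).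
have fI : {in [set~ z] &, injective f}.
  move=> x x'; rewrite !inE => xz x'z.
  have := parP x xz; have := parP x' x'z => /andP[_ h'] /andP[_ h].
  rewrite /f; case: ifP => _; case: ifP => _ [] e1 e2 //.
  - by move: h h'; rewrite e2 -e1 => h /(ltn_trans h); rewrite ltnn.
  - by move: h h'; rewrite e1 -e2 => h /(ltn_trans h); rewrite ltnn.
have fS : [set f x | x in [set~ z]] \subset edgs r.
  apply/subsetP => y /imsetP [x]; rewrite !inE => xz ->.
  have /andP[rx dx] := parP x xz.
  have np : val x != val (par x).
    by apply/eqP => /val_inj e; move: dx; rewrite -e ltnn.
  rewrite /f; case: ifP => h /=; first by rewrite rx h.
  by rewrite rs rx /= ltn_neqAle eq_sym np /= leqNgt h.
have := subset_leq_card fS; rewrite card_in_imset // cardsC1 card_ord.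
by [].
Qed.

Section Tree.
Variable k : nat.
Variable adj : rel 'I_k.
Hypothesis adj_sym : symmetric adj.
Hypothesis adj_irr : irreflexive adj.
Hypothesis adj_conn : forall u v, connect adj u v.
Hypothesis adj_card : #|edgs adj| = k.-1.

Definition radj (u w : 'I_k) := [rel x y | adj x y &&
   ~~ (((x == u) && (y == w)) || ((x == w) && (y == u)))].

Lemma E_cut u w : adj u w -> ~~ connect (radj u w) u w.
Proof.
move=> auw; apply/negP => C.
have rs : symmetric (radj u w).
  move=> x y /=; rewrite adj_sym.
  by case: (x == u); case: (x == w); case: (y == u); case: (y == w).
have rc a b : connect (radj u w) a b.
  apply: connect_sub (adj_conn a b) => x y axy.
  case: (boolP (((x == u) && (y == w)) || ((x == w) && (y == u)))) => [|h].
    case/orP=> /andP[/eqP-> /eqP->] //.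
    by rewrite sym_connect_sym.
  by apply: connect1; rewrite /= axy h.
have := EC rs rc.
have uw : val u != val w by apply/eqP => /val_inj e; rewrite e adj_irr in auw.
have sub : edgs (radj u w) \proper edgs adj.
  apply/properP; split.
    by apply/subsetP => p; rewrite !inE /= => /andP[/andP[-> _] ->].
  exists (if (u < w)%N then (u, w) else (w, u)).
    case: ifP => h; rewrite inE /= ?auw ?h //.
    by rewrite adj_sym auw /= ltn_neqAle eq_sym uw leqNgt h.
  by case: ifP => h; rewrite inE /= !eqxx /= ?orbT ?andbF.
by move=> h; have := leq_ltn_trans h (proper_card sub); rewrite adj_card ltnn.
Qed.

Definition avoid (v : 'I_k) := [rel x y | [&& adj x y, x != v & y != v]].

Lemma avoid_sym v : symmetric (avoid v).
Proof. by move=> x y /=; rewrite adj_sym; congr (_ && _); rewrite andbC. Qed.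

Lemma avoid_csym v x y : connect (avoid v) x y = connect (avoid v) y x.
Proof. exact: sym_connect_sym (@avoid_sym v) x y. Qed.

Lemma path_avoid v x s : path adj x s -> v \notin x :: s -> path (avoid v) x s.
Proof.
elim: s x => //= y s IH x /andP[axy ps]; rewrite !inE negb_or => /andP[xv].
rewrite negb_or => /andP[yv sv]; rewrite axy eq_sym xv eq_sym yv /=.
by apply: IH; rewrite // inE negb_or yv.
Qed.

Lemma avoid_path v x s : path (avoid v) x s -> path adj x s /\ v \notin s.
Proof.
elim: s x => //= y s IH x /andP[/and3P[axy _ yv] ps]; have [-> sv] := IH _ ps.
by rewrite axy inE negb_or eq_sym yv.
Qed.

Lemma connect_avoid v x s : path adj x s -> v \notin x :: s ->
  connect (avoid v) x (last x s).
Proof. by move=> ps vs; apply/connectP; exists s => //; apply: path_avoid. Qed.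

Lemma avoid_radj v w : subrel (avoid v) (radj v w).
Proof. by move=> x y /and3P[axy xv yv]; rewrite /= axy (negbTE xv) (negbTE yv) /= andbF. Qed.

Lemma connect_radj v w x y : connect (avoid v) x y -> connect (radj v w) x y.
Proof. by apply: connect_sub => a b /avoid_radj/connect1. Qed.

Lemma upath (e : rel 'I_k) x y : connect e x y ->
  exists2 p, path e x p & uniq (x :: p) /\ last x p = y.
Proof.
case/connectP => p pp ->; case: (shortenP pp) => p' pp' up' _.
by exists p'.
Qed.

Lemma cut x s v : path adj x s -> uniq (x :: s) -> v \in s -> v != last x s ->
  ~~ connect (avoid v) x (last x s).
Proof.
move=> ps us vs vl; apply/negP => C.
case/splitPr: vs ps us vl C => s1 s2.
rewrite cat_path => /andP[p1 /= /andP[auv p2]].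
case: s2 p2 => [|w s2]; first by rewrite last_cat /= eqxx.
move=> p2 us _; case/andP: p2 => avw p2; rewrite last_cat /= => C.
have us2 : uniq ((x :: s1) ++ v :: w :: s2) := us.
move: us2; rewrite cat_uniq => /and3P[_ hs /andP[vn _]].
have vx1 : v \notin x :: s1 by apply: contra hs => h; apply/hasP; exists v; rewrite ?mem_head.
have uw : last x s1 != w.
  apply: contra hs => /eqP e; apply/hasP; exists w; first by rewrite !inE eqxx orbT.
  by rewrite -e mem_last.
have C1 : connect (avoid v) (last x s1) x by rewrite avoid_csym; apply: connect_avoid.
have C2 : connect (avoid v) (last w s2) w.
  rewrite avoid_csym; apply: connect_avoid => //; by rewrite inE.
have C3 : connect (avoid v) (last x s1) w.
  by apply: connect_trans C1 (connect_trans C C2).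
have avu : adj v (last x s1) by rewrite adj_sym.
case/negP: (E_cut avu).
have vw : v != w by apply: contra vn => /eqP->; rewrite mem_head.
apply: (@connect_trans _ _ w); last by apply: connect_radj; rewrite avoid_csym.
apply: connect1; rewrite /= avw eqxx /= (eq_sym w) (negbTE uw) /=.
by rewrite (eq_sym w) (negbTE vw) andbF.
Qed.

Definition chain n t n' := [&& path adj n (rcons t n'), uniq (n :: rcons t n') &
   all (fun w => valency adj w == 2) t].

Lemma path_head a t y : path adj a (rcons t y) -> adj a (head y t).
Proof. by case: t => [|c t] /= /andP[]. Qed.

Lemma head_mem t (y : 'I_k) : head y t \in rcons t y.
Proof. by case: t => [|c t]; rewrite /= ?mem_head. Qed.

Lemma interior_nbrs x t y a : path adj x (rcons t y) -> uniq (x :: rcons t y) -> a \in t ->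
  exists b1, exists b2, [/\ adj a b1, adj a b2, b1 != b2,
     b1 \in x :: rcons t y & b2 \in x :: rcons t y].
Proof.
move=> pt ut at_; case/splitPr: at_ pt ut => t1 t2.
rewrite rcons_cat rcons_cons cat_path => /andP[_ /= /andP[a1 a2]] ut.
have ut2 : uniq ((x :: t1) ++ a :: rcons t2 y) := ut.
move: ut2; rewrite cat_uniq => /and3P[_ hs _].
exists (last x t1), (head y t2); split.
- by rewrite adj_sym.
- exact: path_head a2.
- apply: contra hs => /eqP e; apply/hasP; exists (head y t2).
    by rewrite inE head_mem orbT.
  by rewrite -e mem_last.
- have := mem_last x t1; rewrite !inE mem_cat => /orP[->//|->]; by rewrite orbT.
- by rewrite !inE mem_cat inE head_mem !orbT.
Qed.

Lemma nbr2 a b1 b2 : adj a b1 -> adj a b2 -> b1 != b2 -> (2 <= valency adj a)%N.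
Proof.
move=> h1 h2 nb; rewrite /valency.
have sub : [set b1; b2] \subset [set w | adj a w].
  by apply/subsetP => b; rewrite !inE => /orP[/eqP->|/eqP->].
by have := subset_leq_card sub; rewrite cards2 nb.
Qed.

Lemma val2_nbr a b1 b2 : valency adj a = 2 -> adj a b1 -> adj a b2 -> b1 != b2 ->
  forall b, adj a b -> (b == b1) || (b == b2).
Proof.
move=> v2 h1 h2 nb b ab.
have sub : [set b1; b2] \subset [set w | adj a w].
  by apply/subsetP => c; rewrite !inE => /orP[/eqP->|/eqP->].
have : [set b1; b2] == [set w | adj a w].
  by rewrite eqEcard sub /= cards2 nb; move: v2; rewrite /valency => ->.
move/eqP => E; have : b \in [set w | adj a w] by rewrite inE.
by rewrite -E !inE.
Qed.

Lemma chain_nbr n t n' a b : chain n t n' -> a \in t -> adj a b -> b \in n :: rcons t n'.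
Proof.
case/and3P=> pt ut /allP v2 at_ ab.
have [b1 [b2 [h1 h2 nb m1 m2]]] := interior_nbrs pt ut at_.
by case/orP: (val2_nbr (eqP (v2 a at_)) h1 h2 nb ab) => /eqP->.
Qed.

Lemma trap n t n' : chain n t n' -> forall q a, a \in t -> path adj a q ->
  n \notin q -> n' \notin q -> last a q \in t.
Proof.
move=> ch; elim=> //= b q IH a at_ /andP[ab pq].
rewrite !inE !negb_or => /andP[bn nq] /andP[bn' n'q].
apply: IH => //.
by move: (chain_nbr ch at_ ab); rewrite inE mem_rcons inE (eq_sym b n) (negbTE bn) (eq_sym b n') (negbTE bn').
Qed.

Lemma node_notin n t n' v : chain n t n' -> v \in nodes adj -> v \notin t.
Proof.
case/and3P=> _ _ /allP v2; rewrite inE; apply: contraL => /v2 /eqP->.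
by [].
Qed.

Lemma chain_neq n t n' : chain n t n' -> n != n'.
Proof.
case/and3P=> _ /= /andP[nn _] _; apply: contra nn => /eqP->.
by rewrite mem_rcons mem_head.
Qed.

Lemma chain_rev n t n' : chain n t n' -> chain n' (rev t) n.
Proof.
case/and3P=> pt ut v2; apply/and3P; split.
- have := rev_path adj n (rcons t n'); rewrite last_rcons belast_rcons rev_cons => ->.
  by rewrite (eq_path (e' := adj)) // => x y; rewrite adj_sym.
- by rewrite -rev_cons -rev_rcons rcons_cons rev_uniq.
- by rewrite all_rev.
Qed.

Lemma chain_avoid n t n' v : chain n t n' -> v \in nodes adj -> v != n -> v != n' ->
  connect (avoid v) n n'.
Proof.
move=> ch vN vn vn'; have := node_notin ch vN.
case/and3P: ch => pt _ _ vt.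
have := connect_avoid pt; rewrite last_rcons; apply.
by rewrite inE mem_rcons inE !negb_or vn vn' vt.
Qed.

Lemma oaE n n' : orb_adj adj n n' ->
  [/\ n \in nodes adj, n' \in nodes adj & exists t, chain n t n'].
Proof.
case/and3P=> nN n'N /existsP [m /existsP [t h]]; split => //.
by exists (tval t).
Qed.

Lemma oaI n n' t : n \in nodes adj -> n' \in nodes adj -> chain n t n' -> orb_adj adj n n'.
Proof.
move=> nN n'N ch; apply/and3P; split => //.
have sz : (size t < k)%N.
  case/and3P: ch => _ ut _.
  have : (size (n :: rcons t n') <= k)%N.
    by move/card_uniqP: ut => <-; rewrite -[X in (_ <= X)%N]card_ord max_card.
  by rewrite /= size_rcons => /ltnW.
apply/existsP; exists (Ordinal sz); apply/existsP; exists (in_tuple t); exact: ch.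
Qed.

Lemma oa_sym n n' : orb_adj adj n n' = orb_adj adj n' n.
Proof.
by apply/idP/idP => /oaE [a b [t ch]]; apply: (oaI b a (chain_rev ch)).
Qed.

Lemma oa_neq n n' : orb_adj adj n n' -> n != n'.
Proof. by case/oaE => _ _ [t /chain_neq]. Qed.

Section Orient.
Variable n0 : 'I_k.
Hypothesis n0N : n0 \in nodes adj.

Lemma orE n n' : oriented adj n0 n n' =
  orb_adj adj n n' && ((n' == n0) || ~~ connect (avoid n') n n0).
Proof. by []. Qed.

Lemma at_least n n' : n != n' -> connect (avoid n') n n0 || connect (avoid n) n' n0.
Proof.
move=> nn'; have [p pp [up lp]] := upath (adj_conn n n0).
case: (boolP (n' \in n :: p)) => [|h]; last by rewrite -lp connect_avoid.
rewrite inE eq_sym (negbTE nn') /= => n'p.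
case/splitPr: n'p pp up lp => p1 p2.
rewrite cat_path last_cat => /andP[_ pp2] up lp; apply/orP; right.
move: up; rewrite /= mem_cat negb_or => /andP[/andP[_ h] _].
rewrite -lp; apply: connect_avoid => //; by case/andP: pp2.
Qed.

Lemma not_both n n' t : chain n t n' -> n0 != n ->
  connect (avoid n') n n0 -> connect (avoid n) n' n0 -> False.
Proof.
move=> ch n0n C1 C2.
have n0t : n0 \notin t := node_notin ch n0N.
have ch' := ch; case/and3P: ch' => pt ut v2.
have [q pq [uq lq]] := upath C1.
case: q pq uq lq => [|b q]; first by move=> _ _ /= e; rewrite e eqxx in n0n.
move=> pq uq lq.
have [pq' n'q] := avoid_path pq.
case/andP: pq' => anb pbq.
move: uq; rewrite [uniq _]/= => /andP[nq _].
have btau : b != head n' t.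
  apply/eqP; case: t ch pt ut v2 n0t => [|c t] ch pt ut v2 n0t /= e.
    by move: n'q; rewrite e mem_head.
  subst c; have := trap ch (a := b) (q := q); rewrite mem_head => /(_ isT pbq).
  move: nq n'q; rewrite !inE !negb_or => /andP[_ ->] /andP[_ ->] /(_ isT isT).
  by rewrite /= in lq; rewrite lq; apply/negP.
set tau := head n' t.
have ant : adj n tau := path_head pt.
have P1 : connect (radj n tau) n n0.
  apply: (@connect_trans _ _ b).
    have ntau : (n == tau) = false.
      by apply/negP => /eqP e; rewrite -e adj_irr in ant.
    by apply: connect1; rewrite /= anb eqxx /= (negbTE btau) ntau.
  rewrite /= in lq; rewrite -lq; apply: connect_radj; apply: connect_avoid => //.
have P2 : connect (radj n tau) n0 n' by apply: connect_radj; rewrite avoid_csym.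
have P3 : connect (radj n tau) n' tau.
  rewrite /tau; case: t ch pt ut v2 n0t {tau ant btau P1 P2} => [|c t] ch pt ut v2 n0t /=.
    exact: connect0.
  apply: connect_radj; rewrite avoid_csym.
  move: pt ut; rewrite /= => /andP[_ pt] /andP[nt _].
  have := connect_avoid pt; rewrite last_rcons; apply.
  exact: nt.
by case/negP: (E_cut ant); apply: connect_trans P1 (connect_trans P2 P3).
Qed.

Lemma or_xor n n' : orb_adj adj n n' -> oriented adj n0 n n' = ~~ oriented adj n0 n' n.
Proof.
move=> oa; have oa' : orb_adj adj n' n by rewrite oa_sym.
have nn' := oa_neq oa; have [_ _ [t ch]] := oaE oa.
rewrite !orE oa oa' /=.
case: (eqVneq n' n0) => [e|n'n0].
  by rewrite e connect0 orbF /= (negbTE (_ : n != n0)) // -e.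
case: (eqVneq n n0) => [e|nn0]; first by rewrite e connect0.
rewrite /=; have := at_least nn'.
case: (boolP (connect (avoid n') n n0)) => C1 /=; last by move=> ->.
case: (boolP (connect (avoid n) n' n0)) => // C2 _.
by case: (not_both ch _ C1 C2); rewrite eq_sym.
Qed.

Lemma uniq_out n n1 n2 : oriented adj n0 n n1 -> oriented adj n0 n n2 -> n1 = n2.
Proof.
rewrite !orE => /andP[oa1 h1] /andP[oa2 h2]; apply/eqP/negPn/negP => n12.
have [nN n1N [t1 ch1]] := oaE oa1; have [_ n2N [t2 ch2]] := oaE oa2.
have nn1 := oa_neq oa1; have nn2 := oa_neq oa2.
case: (eqVneq n1 n0) => [e1|n10].
  have e2 : (n2 == n0) = false by rewrite -e1 eq_sym (negbTE n12).
  rewrite e2 /= in h2; case/negP: h2; rewrite -e1.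
  by apply: (chain_avoid ch1) => //; rewrite eq_sym.
case: (eqVneq n2 n0) => [e2|n20].
  rewrite (negbTE n10) /= in h1; case/negP: h1; rewrite -e2.
  by apply: (chain_avoid ch2) => //; rewrite eq_sym.
rewrite (negbTE n10) /= in h1; rewrite (negbTE n20) /= in h2.
have L a b s : orb_adj adj n b -> a \in nodes adj -> a != n -> a != b ->
    path adj b s -> a \notin b :: s -> last b s = n0 -> connect (avoid a) n n0.
  move=> oab aN an ab ps abs ls; have [_ _ [tb chb]] := oaE oab.
  apply: (connect_trans (chain_avoid chb aN an ab)); rewrite -ls.
  exact: connect_avoid.
have [p pp [up lp]] := upath (adj_conn n n0).
have inp a : a != n -> ~~ connect (avoid a) n n0 -> a \in p.
  move=> an; apply: contraR => ap; rewrite -lp connect_avoid //.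
  by rewrite inE negb_or an.
have n2p : n2 \in p by apply: (inp n2 _ h2); rewrite eq_sym.
case/splitPr: n2p pp up lp => s1 s2.
rewrite cat_path last_cat /= => /andP[_ /andP[_ ps2]] up lp.
have up2 : uniq ((n :: s1) ++ n2 :: s2) := up.
move: up2; rewrite cat_uniq => /and3P[_ _ /= /andP[n2s2 _]].
case: (boolP (n1 \in s2)) => [n1s2|n1s2].
  case/splitPr: n1s2 ps2 lp n2s2 => u1 u2.
  move=> pp lp n2s.
  have pu2 : path adj n1 u2 by move: pp; rewrite cat_path /= => /andP[_ /andP[]].
  rewrite last_cat /= in lp.
  case/negP: h2; apply: (L n2 n1 u2 oa1 n2N _ _ pu2 _ lp).
  - by rewrite eq_sym.
  - by rewrite eq_sym.
  - by move: n2s; rewrite mem_cat negb_or => /andP[_].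
case/negP: h1; apply: (L n1 n2 s2 oa2 n1N _ n12 ps2 _ lp); first by rewrite eq_sym.
by rewrite inE negb_or n12.
Qed.

Lemma exists_out n : n \in nodes adj -> n != n0 -> exists n1, oriented adj n0 n n1.
Proof.
move=> nN nn0; have [p pp [up lp]] := upath (adj_conn n n0).
have n0p : n0 \in p.
  by have := mem_last n p; rewrite lp inE eq_sym (negbTE nn0).
set N := nodes adj.
have hp : has (fun x => x \in N) p by apply/hasP; exists n0.
set j := find (fun x => x \in N) p.
have jp : (j < size p)%N by rewrite -has_find.
set n1 := nth n p j; set t := take j p.
have n1N : n1 \in N := nth_find n hp.
have rt : rcons t n1 = take j.+1 p by rewrite (take_nth n jp).
have pt : path adj n (rcons t n1) by rewrite rt take_path.
have ut : uniq (n :: rcons t n1) by rewrite rt; exact: (take_uniq j.+2 up).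
have ch : chain n t n1.
  apply/and3P; split => //; apply/allP => a at_.
  have [b1 [b2 [h1 h2 nb _ _]]] := interior_nbrs pt ut at_.
  have v2 := nbr2 h1 h2 nb.
  have aN : a \notin N.
    move: at_; case/(nthP n) => i; rewrite size_take jp => ij <-.
    by rewrite nth_take // (before_find n ij).
  by move: aN; rewrite inE -ltnNge ltnS => v3; rewrite eqn_leq v3 v2.
exists n1; rewrite orE (oaI nN n1N ch) /=.
case: (eqVneq n1 n0) => //= n10.
rewrite -lp; apply: cut => //; first by rewrite mem_nth.
by rewrite lp.
Qed.

Lemma out_card n : n \in nodes adj -> #|[set n' | oriented adj n0 n n']| = (n != n0).
Proof.
move=> nN; case: (eqVneq n n0) => [->|nn0] /=.
  apply/eqP; rewrite cards_eq0; apply/eqP/setP => x; rewrite !inE orE.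
  case: (boolP (orb_adj adj n0 x)) => //= oa.
  by rewrite connect0 orbF; apply/negP => /eqP e; rewrite e in oa; have := oa_neq oa; rewrite eqxx.
have [n1 o1] := exists_out nN nn0.
rewrite (_ : [set n' | oriented adj n0 n n'] = [set n1]) ?cards1 //.
apply/setP => x; rewrite !inE; apply/idP/eqP => [ox|->//].
exact: uniq_out ox o1.
Qed.

End Orient.

End Tree.

Section Final.
Variable k : nat.

Lemma nz3 (a b c : int) : a + b + c != 0 -> [\/ a != 0, b != 0 | c != 0].
Proof.
case: (eqVneq a 0) => [->|]; last by move=> h _; apply: Or31.
case: (eqVneq b 0) => [->|]; last by move=> h _; apply: Or32.
by rewrite !add0r => ->; apply: Or33.
Qed.

Lemma HD_gen n (A R P Pp : gpoly k) (pr : pred (expo k)) (a : expo k) :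
  islead n A a ->
  (forall g, gcoef (gsub R (gmul P A)) g != 0 -> g 0 n < a 0 n) ->
  (forall g, gcoef (gsub R (gmul Pp A)) g != 0 -> g 0 n < a 0 n) ->
  (forall x, ~~ pr x -> x 0 n < 0) ->
  forall g, gcoef (gsub P (filter (fun m => pr m.1) Pp)) g != 0 -> g 0 n < 0.
Proof.
move=> la HP HPp Hpr; apply: (core la) => g.
rewrite gcoef_gmul_sub.
have E : gcoef (gmul P A) g - gcoef (gmul (filter (fun m => pr m.1) Pp) A) g =
   gcoef (gsub R (gmul Pp A)) g - gcoef (gsub R (gmul P A)) g
   + gcoef (gmul (filter (fun m => ~~ pr m.1) Pp) A) g.
  rewrite !gcoef_gsub (gcoef_gmul_split Pp A pr g); ring.
rewrite E => /nz3 [/HPp|h|/(bound_mul la)] //.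
  by apply: HP; rewrite oppr_eq0 in h.
apply => x; rewrite (gcoef_filter Pp (fun y => ~~ pr y)); case: ifP => [/Hpr h _ //|]; by rewrite eqxx.
Qed.

End Final.

Unset Implicit Arguments.

Theorem mainTheorem2
  (k : nat) (adj : rel 'I_k) (e : 'I_k -> int)
  (Htree : is_tree adj)
  (Hneg : neg_def (intmat adj e))
  (Hnodes : nodes adj != set0)
  (* Z = Taylor expansion of the zeta function f *)
  (Z : series k)
  (HZ : is_taylor (zNum adj (intmat adj e)) (zDen adj (intmat adj e)) Z)
  (* h = [h0] in H = L'/L *)
  (h0 : expo k) (Hh0 : inL' (intmat adj e) h0)
  (* f_h = Q / prod_{c in cs}(1 - t^c), whose expansion is Z_h *)
  (Q : gpoly k) (cs : seq (expo k))
  (Hfh : ratrep (Zpart Z h0) Q cs)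
  (* reduced zeta function f_h(t_N) = R / A, A = prod_n (1 - t_N^{a_n}) *)
  (lam : 'I_k -> rat) (Hlam : forall n, n \in nodes adj -> 0 < lam n)
  (R : gpoly k) (HRsupp : node_supp adj R)
  (HR : gequiv (gmul R (gred adj (gprod (map (@gbinom k) cs))))
            (gmul (gred adj Q) (Aden adj (intmat adj e) lam)))
  (* P^n_h and P^{n,n'}_h *)
  (Pv : 'I_k -> gpoly k)
  (HPv : forall n, n \in nodes adj -> is_Pn adj (intmat adj e) lam R n (Pv n))
  (Pe : 'I_k -> 'I_k -> gpoly k)
  (HPe : forall n n', orb_adj adj n n' -> is_Pnn adj (intmat adj e) lam R n n' (Pe n n'))
  (* P^+_h *)
  (Pplus : gpoly k) (HPplus : is_Pplus adj (intmat adj e) lam R Pplus)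
  (n0 : 'I_k) (Hn0 : n0 \in nodes adj) :
  forall b : expo k,
    Ph_coef adj Pv Pe b = mult_s adj n0 b * gcoef Pplus b.
Proof.
move=> b.
case: Htree => adj_sym adj_irr adj_conn adj_card.
have offd : forall i j, i != j -> 0 <= intmat adj e i j.
  by move=> i j ij; rewrite /intmat mxE (negbTE ij); case: (adj i j).
have Es := Estar_sign offd Hneg.
have avec_nn : forall n' n, n' \in nodes adj -> n \in nodes adj ->
    0 <= avec adj (intmat adj e) lam n' 0 n.
  move=> n' n n'N nN; rewrite /avec /projN !mxE nN.
  by apply: mulr_ge0; [exact: ltW (Hlam _ n'N) | have := (Es n').1 n; rewrite /Estar !mxE].
have avec_nz : forall n', n' \in nodes adj -> avec adj (intmat adj e) lam n' != 0.
  move=> n' n'N; apply/eqP => /(congr1 (fun x : expo k => x 0 n')).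
  rewrite /avec /projN !mxE n'N => h.
  have := (Es n').2; rewrite /Estar !mxE => h2.
  by have := mulr_gt0 (Hlam _ n'N) h2; rewrite h ltxx.
have leadA : forall n, n \in nodes adj -> exists2 a,
    islead n (Aden adj (intmat adj e) lam) a & a 0 n = sumA adj (intmat adj e) lam 0 n.
  move=> n nN.
  have [|a la an] := lead_gprod (n := n) (cs := map (avec adj (intmat adj e) lam) (enum (nodes adj))).
    move=> c /mapP [n' n'in ->]; rewrite mem_enum in n'in.
    by split; [exact: avec_nz | exact: avec_nn].
  exists a; first by rewrite -map_comp in la; exact: la.
  by rewrite an /sumA summxE big_map big_enum.
have Pv_coef : forall n, n \in nodes adj -> forall g,
    gcoef (Pv n) g = if 0 <= g 0 n then gcoef Pplus g else 0.
  move=> n nN g.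
  have [a la an] := leadA n nN.
  have [_ supp negd] := HPv n nN.
  have [_ _ negp] := HPplus.
  have H := HD_gen (R := R) (P := Pv n) (Pp := Pplus) (pr := fun x : expo k => 0 <= x 0 n) la
     (fun g h => ltac:(rewrite an; exact: negd g h))
     (fun g h => ltac:(rewrite an; exact: negp n nN g h))
     (fun x h => ltac:(by rewrite ltNge)) (g := g).
  move: H; rewrite gcoef_gsub (gcoef_filter Pplus (fun x : expo k => 0 <= x 0 n)).
  case: ifP => h H.
    apply/eqP; rewrite -subr_eq0; apply/negPn/negP => /H; by rewrite ltNge h.
  by apply/eqP/negPn/negP => /supp; rewrite h.
have Pe_coef : forall n n', orb_adj adj n n' -> forall g,
    gcoef (Pe n n') g = if (0 <= g 0 n) || (0 <= g 0 n') then gcoef Pplus g else 0.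
  move=> n n' oa g.
  have [nN n'N _] := oaE oa.
  have [a la an] := leadA n nN.
  have [a' la' an'] := leadA n' n'N.
  have [_ supp negd negd'] := HPe n n' oa.
  have [_ _ negp] := HPplus.
  pose pr := fun x : expo k => (0 <= x 0 n) || (0 <= x 0 n').
  have H := HD_gen (R := R) (P := Pe n n') (Pp := Pplus) (pr := pr) la
     (fun g h => ltac:(rewrite an; exact: negd g h))
     (fun g h => ltac:(rewrite an; exact: negp n nN g h))
     (fun x h => ltac:(by move: h; rewrite /pr negb_or -!ltNge => /andP[])) (g := g).
  have H' := HD_gen (R := R) (P := Pe n n') (Pp := Pplus) (pr := pr) la'
     (fun g h => ltac:(rewrite an'; exact: negd' g h))
     (fun g h => ltac:(rewrite an'; exact: negp n' n'N g h))
     (fun x h => ltac:(by move: h; rewrite /pr negb_or -!ltNge => /andP[])) (g := g).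
  move: H H'; rewrite gcoef_gsub (gcoef_filter Pplus pr) /pr.
  case: ifP => h H H'.
    apply/eqP; rewrite -subr_eq0; apply/negPn/negP => nz.
    by move: h; rewrite !leNgt (H nz) (H' nz).
  by apply/eqP/negPn/negP => /supp; rewrite h.
pose X := fun n => 0 <= b 0 n.
have CI := @comb_identity k (orb_adj adj) (oriented adj n0) (nodes adj) n0 X Hn0 (fun n n' oa => ltac:(by case: (oaE oa)))
  (oa_sym adj_sym) (fun n n' h => ltac:(by case/andP: h))
  (fun n n' oa => or_xor adj_sym adj_irr adj_conn adj_card Hn0 oa)
  (fun n nN => out_card adj_sym adj_irr adj_conn adj_card Hn0 nN).
transitivity ((\sum_n \sum_(n' | orb_adj adj n n' && (n < n')%N) ind (X n || X n')
    - \sum_(n in nodes adj) ((delta (orb_adj adj) n)%:Z - 1) * ind (X n)) * gcoef Pplus b).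
  rewrite mulrBl !mulr_suml /Ph_coef; congr (_ - _).
    apply: eq_bigr => n _; rewrite mulr_suml; apply: eq_bigr => n' /andP[oa _].
    by rewrite Pe_coef // /ind /X /=; case: ifP; rewrite ?mul1r ?mul0r.
  apply: eq_bigr => n nN; rewrite Pv_coef // -mulrA; congr (_ * _).
  by rewrite /X /ind /=; case: ifP; rewrite ?mul1r ?mul0r.
rewrite CI /mult_s; congr (_ * _); congr (_ + _).
apply: eq_bigr => n _; apply: eq_bigr => n' _.
by rewrite /X /ind ltNge.
Qed.
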